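(* Let $d\ge1$ and let $P(x_1,\dots,x_d)$ be a polynomial such that for every $\mathcal{X}\subseteq\{1,\dots,d\}$ the monomial $\prod_{j\in\mathcal{X}}x_j$ has a positive coefficient, and every other monomial has coefficient zero. Let $K(\mathbf{t})=\log P(e^{t_1},\dots,e^{t_d})$. Then $P$ has full rank and is aperiodic. Moreover, for every $\boldsymbol\lambda\in(0,1)^d$ and every $\boldsymbol\ell$ on the boundary of $[-\infty,+\infty]^d$, $K(\mathbf{t})-\boldsymbol\lambda^T\mathbf{t}\to+\infty$ as $\mathbf{t}\to\boldsymbol\ell$. Consequently there exists a unique $\boldsymbol\tau\in\mathbb{R}^d$ at which the gradient of $\mathbf{t}\mapsto K(\mathbf{t})-\boldsymbol\lambda^T\mathbf{t}$ vanishes.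
   Context: For a multivariate power series $B(\mathbf{z})$ in $d$ variables, its support is $S_B=\{\mathbf{n}\in\mathbb{Z}_{\ge0}^d:[\mathbf{z}^{\mathbf{n}}]B\neq0\}$ and $\Delta(S_B)=\{\mathbf{n}-\mathbf{m}:\mathbf{n},\mathbf{m}\in S_B\}$. $B$ has full rank if the real vector space spanned by $\Delta(S_B)$ has dimension $d$. For an integer $q\ge2$, $B$ is $q$-periodic if there exist nonnegative integers $p_1,\dots,p_d$, not all divisible by $q$, and an integer $r$ such that $\{\mathbf{p}^T\mathbf{n}:\mathbf{n}\in S_B\}\subseteq r+q\mathbb{Z}_{\ge0}$; $B$ is aperiodic if it is not $q$-periodic for any $q\ge2$. *)

(* Defs.v *)
From HB Require Import structures.
From mathcomp Require Import all_boot all_order all_algebra.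
From mathcomp Require Import all_classical all_reals all_analysis.
From mathcomp Require mpoly.
Set Implicit Arguments. Unset Strict Implicit. Unset Printing Implicit Defensive.
Import Order.TTheory GRing.Theory Num.Theory.
Import numFieldNormedType.Exports.
Local Open Scope ring_scope.

Coercion mpoly.fun_of_multinom : mpoly.multinom >-> Funclass.

Section Defs.
Variables (R : realType) (d : nat).

(* A multivariate power series in d variables is given by its coefficient
   function on exponent vectors (multinomials 'X_{1..d}). *)
Definition series := mpoly.multinom d -> R.

Definition supp (B : series) : set (mpoly.multinom d) :=
  [set n | B n != 0].

Definition expvec (n : mpoly.multinom d) : 'rV[R]_d := \row_i ((n i)%:R).

Definition Delta (B : series) : set 'rV[R]_d :=
  [set v | exists n m, supp B n /\ supp B m /\ v = expvec n - expvec m].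

(* full rank: the real span of Delta(S_B) has dimension d
   (the span of a set is the union of the spans of its finite subfamilies). *)
Definition full_rank (B : series) : Prop :=
  exists s : seq 'rV[R]_d, (forall v, v \in s -> Delta B v) /\ \dim (vector.span s) = d.

Definition periodic (q : nat) (B : series) : Prop :=
  exists (p : 'I_d -> nat) (r : int),
    (exists i, ~~ (q %| p i)%N) /\
    forall n, supp B n ->
      exists k : nat, ((\sum_(i < d) p i * n i)%N)%:Z = r + ((q * k)%N)%:Z.

Definition aperiodic (B : series) : Prop :=
  forall q : nat, (2 <= q)%N -> ~ periodic q B.

Definition dotr (lam t : 'rV[R]_d) : R := \sum_(i < d) lam ord0 i * t ord0 i.

Definition Kfun (P : mpoly.mpoly d R) (t : 'rV[R]_d) : R :=
  ln (mpoly.meval (fun i => expR (t ord0 i)) P).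

Definition near_ext (l : \bar R) (e : R) (x : R) : Prop :=
  match l with
  | EFin r => `|x - r| < e
  | EPInf => e^-1 < x
  | ENInf => x < - e^-1
  end.

(* F(t) -> +oo as t -> l, t ranging over R^d, l in [-oo,+oo]^d
   (product topology of the extended reals). *)
Definition tends_to_pinfty (F : 'rV[R]_d -> R) (l : 'I_d -> \bar R) : Prop :=
  forall M : R, exists2 e : R, 0 < e &
    forall t : 'rV[R]_d, (forall i, near_ext (l i) e (t ord0 i)) -> M < F t.

End Defs.

(* Main.v *)
Require Import Defs.
From HB Require Import structures.
From mathcomp Require Import all_boot all_order all_algebra.
From mathcomp Require Import all_classical all_reals all_analysis.
From mathcomp Require mpoly.
From mathcomp Require Import ring lra zify.
Import Order.TTheory GRing.Theory Num.Theory.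
Import numFieldNormedType.Exports.
Local Open Scope ring_scope.
Canonical mpoly.mpoly_multinom__canonical__eqtype_Equality.


Lemma transfer (R : realType) (d : nat) (f : 'rV[R]_d -> R) (tau v : 'rV[R]_d) (D : R) :
  is_derive (0:R) 1 (fun s : R => f (tau + s *: v)) D -> is_derive tau v f D.
Proof.
have E : (fun h : R => h^-1 *: (((fun s : R => f (tau + s *: v)) \o shift 0) (h *: 1) - f (tau + 0 *: v))) = (fun h : R => h^-1 *: ((f \o shift tau) (h *: v) - f tau)).
  apply/funext => h /=; rewrite scale0r !addr0 [tau + _]addrC.
  by congr (_ *: (f (_ *: _ + _) - _)); rewrite /GRing.scale /= mulr1.
case=> H1 H2; split.
  by move: H1; rewrite /derivable E.
by move: H2; rewrite /derive E.
Qed.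

Lemma is_derive_seqsum (R : realType) (T : Type) (l : seq T) (f : T -> R -> R) (df : T -> R) (x : R) :
  (forall a, is_derive x 1 (f a) (df a)) ->
  is_derive x 1 (fun s => \sum_(a <- l) f a s) (\sum_(a <- l) df a).
Proof.
move=> H; elim: l => [|a l IH].
  rewrite big_nil (_ : (fun s => _) = cst 0); first exact: is_derive_cst.
  by apply/funext => s; rewrite big_nil.
rewrite big_cons (_ : (fun s => _) = f a + (fun s => \sum_(a <- l) f a s)).
  exact: is_deriveD.
by apply/funext => s; rewrite big_cons.
Qed.

Lemma is_derive_ext (R : realType) (f g : R -> R) (x df : R) :
  f = g -> is_derive x 1 f df -> is_derive x 1 g df.
Proof. by move=> ->. Qed.

Lemma is_derive_mulk (R : realType) (k x : R) : is_derive x 1 (fun s : R => s * k) k.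
Proof.
  have g0 := is_deriveZ k (is_derive_id x 1).
  have e : (k \*: id) = (fun s : R => s * k) by apply/funext => s; rewrite /= mulrC.
  rewrite e in g0; apply: is_derive_eq g0 _.
  exact: mulr1.
Qed.

Lemma is_derive_aexp (R : realType) (a k x : R) :
  is_derive x 1 (fun s => a * expR (s * k)) (a * (expR (x * k) * k)).
Proof.
have g : is_derive x 1 (fun s : R => s * k) k.
  have g0 := is_deriveZ k (is_derive_id x 1).
  have e : (k \*: id) = (fun s : R => s * k) by apply/funext => s; rewrite /= mulrC.
  rewrite e in g0; apply: is_derive_eq g0 _.
  exact: mulr1.
have h := @is_derive1_comp R expR (fun s => s * k) x _ _ (is_derive_expR (x * k)) g.
have h0 := is_deriveZ a h.
have e : (a \*: (expR \o (fun s : R => s * k))) = (fun s : R => a * expR (s * k)) by apply/funext.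
by rewrite e in h0.
Qed.

Lemma exp_mono_ge0 (R : realType) (x y : R) : 0 <= (x - y) * (expR x - expR y).
Proof.
have [xy|yx] := leP x y.
  by rewrite mulr_le0 // subr_le0 // ler_expR.
by rewrite mulr_ge0 // subr_ge0 ltW // ltr_expR.
Qed.

Lemma exp_mono_eq0 (R : realType) (x y : R) : (x - y) * (expR x - expR y) = 0 -> x = y.
Proof.
move/eqP; rewrite mulf_eq0 !subr_eq0 => /orP[/eqP //|/eqP h].
by rewrite -(expRK x) h expRK.
Qed.

Lemma cont_seqsum (R : realType) (T : topologicalType) (I : Type) (l : seq I) (f : I -> T -> R) (x : T) :
  (forall a, {for x, continuous (f a)}) -> {for x, continuous (fun t => \sum_(a <- l) f a t)}.
Proof.
move=> H; elim: l => [|a l IH].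
  rewrite (_ : (fun t => _) = cst 0); first exact: cst_continuous.
  by apply/funext => t; rewrite big_nil.
rewrite (_ : (fun t => _) = f a + (fun t => \sum_(a <- l) f a t)).
  exact: continuousD.
by apply/funext => t; rewrite big_cons.
Qed.

Section Main.
Variables (R : realType) (d : nat) (P : mpoly.mpoly d R).
Hypothesis hpos : forall m : mpoly.multinom d, (forall i, (m i <= 1)%N) -> 0 < mpoly.mcoeff m P.
Hypothesis hzero : forall m : mpoly.multinom d, ~ (forall i, (m i <= 1)%N) -> mpoly.mcoeff m P = 0.

Let c m := mpoly.mcoeff m P.
Let S := mpoly.msupp P.
Definition dotm (m : mpoly.multinom d) (t : 'rV[R]_d) : R := \sum_(i < d) (m i)%:R * t ord0 i.
Definition Z (t : 'rV[R]_d) := \sum_(m <- S) c m * expR (dotm m t).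

Definition mkm (f : 'I_d -> nat) : mpoly.multinom d := mpoly.Multinom [tuple f i | i < d].
Lemma mkmE f i : mkm f i = f i.
Proof. by rewrite /mkm mpoly.multinomE tnth_mktuple. Qed.

Lemma c_pos (m : mpoly.multinom d) : m \in S -> 0 < c m.
Proof.
rewrite /S mpoly.mcoeff_msupp => h.
have [H|H] := pselect (forall i, (m i <= 1)%N); first exact: hpos.
by rewrite /c hzero ?eqxx in h.
Qed.

Lemma in_S (m : mpoly.multinom d) : (forall i, (m i <= 1)%N) -> m \in S.
Proof. by move=> H; rewrite /S mpoly.mcoeff_msupp gt_eqF // hpos. Qed.

Lemma c_ge0 (m : mpoly.multinom d) : 0 <= c m.
Proof.
have [mS|mS] := boolP (m \in S); first exact/ltW/c_pos.
by move: mS; rewrite /S /c -mpoly.mcoeff_eq0 => /eqP ->.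
Qed.

Lemma term_le (m : mpoly.multinom d) (t : 'rV[R]_d) : m \in S -> c m * expR (dotm m t) <= Z t.
Proof.
move=> mS; rewrite /Z (bigD1_seq m) //=; last exact: mpoly.msupp_uniq.
by rewrite lerDl sumr_ge0 // => x _; rewrite mulr_ge0 // ?expR_ge0 ?c_ge0.
Qed.

Lemma Z_pos (t : 'rV[R]_d) : 0 < Z t.
Proof.
have h0 : mkm (fun=> 0%N) \in S by apply: in_S => i; rewrite mkmE.
apply: lt_le_trans (@term_le _ t h0); rewrite mulr_gt0 ?expR_gt0 //; exact: c_pos.
Qed.

Lemma meval_Z (t : 'rV[R]_d) : mpoly.meval (fun i => expR (t ord0 i)) P = Z t.
Proof.
rewrite mpoly.mevalE /Z; apply: eq_bigr => m _; congr (_ * _).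
by rewrite /dotm expR_sum; apply: eq_bigr => i _; rewrite expRM_natl.
Qed.

Lemma Kfun_Z (t : 'rV[R]_d) : Kfun P t = ln (Z t).
Proof. by rewrite /Kfun meval_Z. Qed.


Definition cmin := \big[Order.min/1]_(m <- S) c m.

Lemma cmin_gt0 : 0 < cmin.
Proof.
rewrite /cmin big_seq; elim/big_rec: _ => // m x mS x0.
by rewrite lt_min x0 c_pos.
Qed.

Lemma cmin_le (m : mpoly.multinom d) : m \in S -> cmin <= c m.
Proof.
move=> mS; rewrite /cmin (bigD1_seq m) //=; last exact: mpoly.msupp_uniq.
by rewrite ge_min lexx.
Qed.


Lemma aper : aperiodic (fun m => mpoly.mcoeff m P).
Proof.
move=> q q2 [p [r [[i hi] H]]].
have h0 : supp (fun m => mpoly.mcoeff m P) (mkm (fun=> 0%N)).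
  by rewrite /supp /=; apply: lt0r_neq0; apply: hpos => j; rewrite mkmE.
have h1 : supp (fun m => mpoly.mcoeff m P) (mkm (fun j => nat_of_bool (j == i))).
  by rewrite /supp /=; apply: lt0r_neq0; apply: hpos => j; rewrite mkmE leq_b1.
have [k0 e0] := H _ h0.
have [k1 e1] := H _ h1.
have s0 : (\sum_(j < d) p j * mkm (fun=> 0%N) j)%N = 0%N.
  by rewrite big1 // => j _; rewrite mkmE muln0.
have s1 : (\sum_(j < d) p j * mkm (fun j => nat_of_bool (j == i)) j)%N = p i.
  rewrite (bigD1 i) //= big1 ?addn0 ?mkmE ?eqxx ?muln1 // => j /negbTE hj.
  by rewrite mkmE hj muln0.
rewrite s0 in e0; rewrite s1 in e1.
have e : (p i + q * k0 = q * k1)%N.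
  lia.
have : (q %| p i + q * k0)%N by rewrite e dvdn_mulr.
by rewrite dvdn_addl ?dvdn_mulr // (negbTE hi).
Qed.

Lemma frank : full_rank (fun m => mpoly.mcoeff m P).
Proof.
exists [seq delta_mx 0 i | i <- enum 'I_d]; split.
  move=> v /mapP [i _ ->].
  exists (mkm (fun j => nat_of_bool (j == i))), (mkm (fun=> 0%N)); split; last split.
  - by rewrite /supp /=; apply: lt0r_neq0; apply: hpos => j; rewrite mkmE leq_b1.
  - by rewrite /supp /=; apply: lt0r_neq0; apply: hpos => j; rewrite mkmE.
  - apply/rowP => j; rewrite !mxE !mkmE subr0 /=.
    by case: (j == i).
have -> : vector.span [seq (delta_mx 0 i : 'rV[R]_d) | i <- enum 'I_d] = (fullv : {vspace 'rV[R]_d}).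
  apply/eqP; rewrite eqEsubv subvf /=; apply/subvP => v _; rewrite (row_sum_delta v).
  apply: memv_suml => i _; apply: memvZ; apply: memv_span.
  by apply/mapP; exists i => //; rewrite mem_enum.
by rewrite dimvf /dim /= mul1n.
Qed.

Variable lam : 'rV[R]_d.
Hypothesis hlam : forall i, 0 < lam ord0 i < 1.

Definition F (t : 'rV[R]_d) := ln (Z t) - dotr lam t.
Definition mu (i : 'I_d) : R := Order.min (lam ord0 i) (1 - lam ord0 i).

Lemma mu_gt0 i : 0 < mu i.
Proof. by have /andP[h1 h2] := hlam i; rewrite lt_min h1 subr_gt0 h2. Qed.

Lemma term_ge (t : 'rV[R]_d) j :
  mu j * `|t ord0 j| <= ((nat_of_bool (0 < t ord0 j)%R)%:R - lam ord0 j) * t ord0 j.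
Proof.
have [tp|tn] := ltP 0 (t ord0 j).
  by rewrite /= gtr0_norm // ler_pM2r // ge_min lexx orbT.
rewrite /= ler0_norm // (_ : false%:R = 0 :> R) // sub0r mulNr -mulrN.
have [->|tn'] := eqVneq (t ord0 j) 0; first by rewrite oppr0 !mulr0.
by rewrite ler_pM2r ?ge_min ?lexx // oppr_gt0 lt_neqAle tn' tn.
Qed.

Lemma mu_le_term (t : 'rV[R]_d) j :
  0 <= (((nat_of_bool (0 < t ord0 j)%R)%:R - lam ord0 j) * t ord0 j).
Proof. by apply: le_trans (term_ge t j); rewrite mulr_ge0 // ltW // mu_gt0. Qed.



Lemma coerc (t : 'rV[R]_d) i : ln cmin + mu i * `|t ord0 i| <= F t.
Proof.
pose X := mkm (fun j => nat_of_bool (0 < t ord0 j)%R).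
have XS : X \in S by apply: in_S => j; rewrite mkmE leq_b1.
have h1 : ln cmin + dotm X t <= ln (Z t).
  have := @term_le X t XS.
  rewrite -ler_ln ?posrE ?Z_pos ?mulr_gt0 ?expR_gt0 ?c_pos // lnM ?posrE ?expR_gt0 ?c_pos // expRK.
  by apply: le_trans; rewrite lerD2r ler_ln ?posrE ?cmin_gt0 ?c_pos // cmin_le.
have h2 : dotm X t - dotr lam t = \sum_j (((nat_of_bool (0 < t ord0 j)%R)%:R - lam ord0 j) * t ord0 j).
  by rewrite /dotm /dotr -sumrB; apply: eq_bigr => j _; rewrite mkmE mulrBl.
have h3 : mu i * `|t ord0 i| <= \sum_j (((nat_of_bool (0 < t ord0 j)%R)%:R - lam ord0 j) * t ord0 j).
  rewrite (bigD1 i) //=; apply: le_trans (term_ge t i) _.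
  by rewrite lerDl sumr_ge0 // => j _; exact: mu_le_term.
rewrite /F; lra.
Qed.


Lemma F_eq (t : 'rV[R]_d) : Kfun P t - dotr lam t = F t.
Proof. by rewrite /F Kfun_Z. Qed.

Lemma tends (l : 'I_d -> \bar R) : (exists i, l i = +oo%E \/ l i = -oo%E) ->
  tends_to_pinfty (fun t => Kfun P t - dotr lam t) l.
Proof.
case=> i hi M.
pose A := (M - ln cmin) / mu i.
have muA : mu i * A = M - ln cmin by rewrite /A mulrC divfK // gt_eqF // mu_gt0.
have hA : A <= `|A| by exact: ler_norm.
have hA0 : 0 <= `|A| by [].
exists ((`|A| + 1)^-1); first by rewrite invr_gt0; lra.
move=> t ht; have hti := ht i.
have key : `|A| + 1 < `|t ord0 i|.
  case: hi hti => -> /=; rewrite invrK => hti.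
    by apply: lt_le_trans hti _; exact: ler_norm.
  have : - t ord0 i <= `|t ord0 i| by rewrite -normrN ler_norm.
  lra.
have hmu := mu_gt0 i.
have k2 : mu i * (`|A| + 1) < mu i * `|t ord0 i| by rewrite ltr_pM2l.
rewrite mulrDr mulr1 in k2.
have k3 : mu i * A <= mu i * `|A| by rewrite ler_pM2l.
have := coerc t i; rewrite F_eq; lra.
Qed.


Lemma dot_shift (w : 'I_d -> R) (tau : 'rV[R]_d) i (s : R) :
  \sum_j w j * (tau + s *: delta_mx 0 i) ord0 j = \sum_j w j * tau ord0 j + s * w i.
Proof.
rewrite (eq_bigr (fun j => w j * tau ord0 j + w j * (s * ((j == i) : nat)%:R))); last first.
  by move=> j _; rewrite !mxE /= mulrDr.
rewrite big_split /=; congr (_ + _).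
rewrite (bigD1 i) //= big1 ?addr0 ?eqxx ?mulr1 1?mulrC // => j /negbTE ->.
by rewrite mulr0 mulr0.
Qed.

Lemma Z_shift (tau : 'rV[R]_d) i (s : R) :
  Z (tau + s *: delta_mx 0 i) = \sum_(m <- S) (c m * expR (dotm m tau)) * expR (s * (m i)%:R).
Proof.
apply: eq_bigr => m _; rewrite /dotm dot_shift expRD mulrA; by congr (_ * expR _).
Qed.

Lemma dotr_shift (tau : 'rV[R]_d) i (s : R) :
  dotr lam (tau + s *: delta_mx 0 i) = dotr lam tau + s * lam ord0 i.
Proof. by rewrite /dotr dot_shift. Qed.

Lemma deriv1D (tau : 'rV[R]_d) i (x : R) :
  is_derive x 1 (fun s => F (tau + s *: delta_mx 0 i))
    ((Z (tau + x *: delta_mx 0 i))^-1 *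
      (\sum_(m <- S) (c m * expR (dotm m tau)) * (expR (x * (m i)%:R) * (m i)%:R))
     - lam ord0 i).
Proof.
pose H := fun s => \sum_(m <- S) (c m * expR (dotm m tau)) * expR (s * (m i)%:R).
have HD : is_derive x 1 H (\sum_(m <- S) (c m * expR (dotm m tau)) * (expR (x * (m i)%:R) * (m i)%:R)).
  have hh := (@is_derive_seqsum R _ S (fun m s => (c m * expR (dotm m tau)) * expR (s * (m i)%:R))
     (fun m => (c m * expR (dotm m tau)) * (expR (x * (m i)%:R) * (m i)%:R)) x (fun m => is_derive_aexp _ _ _ x)).
  exact hh.
have Hx : H x = Z (tau + x *: delta_mx 0 i) by rewrite Z_shift.
have Hpos : 0 < H x by rewrite Hx Z_pos.
have LD := @is_derive1_comp R (@ln R) H x _ _ (is_derive1_ln Hpos) HD.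
have LinD : is_derive x 1 (cst (dotr lam tau) + (fun s : R => s * lam ord0 i)) (0 + lam ord0 i).
  exact: is_deriveD (is_derive_mulk _ _ _).
have := is_deriveB LD LinD.
rewrite Hx add0r; apply: is_derive_ext; apply/funext => s.
by rewrite /= /F Z_shift dotr_shift.
Qed.

Definition Dv (tau : 'rV[R]_d) i :=
  (Z tau)^-1 * (\sum_(m <- S) c m * expR (dotm m tau) * (m i)%:R) - lam ord0 i.

Lemma is_derive_F (tau : 'rV[R]_d) i : is_derive tau (delta_mx 0 i) F (Dv tau i).
Proof.
apply: transfer; have h := deriv1D tau i 0.
rewrite scale0r addr0 in h; apply: is_derive_eq h _.
rewrite /Dv; congr (_ * _ - _).
by apply: eq_bigr => m _; rewrite mul0r expR0 mul1r.
Qed.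


Lemma Dv0_sum (tau : 'rV[R]_d) (del : 'I_d -> R) : (forall j, Dv tau j = 0) ->
  \sum_(m <- S) c m * expR (dotm m tau) * (\sum_j (m j)%:R * del j)
  = (\sum_j lam ord0 j * del j) * Z tau.
Proof.
move=> hD.
have hj j : \sum_(m <- S) c m * expR (dotm m tau) * (m j)%:R = lam ord0 j * Z tau.
  have := hD j; rewrite /Dv => /eqP; rewrite subr_eq0 => /eqP <-.
  by rewrite mulrAC mulVf ?mul1r // gt_eqF // Z_pos.
rewrite mulr_suml.
under eq_bigr do rewrite mulr_sumr.
rewrite exchange_big /=; apply: eq_bigr => j _.
rewrite -mulrA (mulrC (del j)) mulrA -hj mulr_suml; apply: eq_bigr => m _.
by rewrite !mulrA.
Qed.

Lemma uniq_crit (tau sig : 'rV[R]_d) : (forall j, Dv tau j = 0) -> (forall j, Dv sig j = 0) -> tau = sig.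
Proof.
move=> ht hs.
pose del j := sig ord0 j - tau ord0 j.
pose h (m : mpoly.multinom d) := \sum_j (m j)%:R * del j.
pose a m := c m * expR (dotm m tau).
have hdot m : dotm m sig = dotm m tau + h m.
  by rewrite /h /dotm -big_split /=; apply: eq_bigr => j _; rewrite /del; ring.
pose Lam := \sum_j lam ord0 j * del j.
have s2 : \sum_(m <- S) a m * h m = Lam * Z tau by exact: Dv0_sum.
have s1 : \sum_(m <- S) a m * expR (h m) * h m = Lam * Z sig.
  rewrite -(@Dv0_sum sig del hs); apply: eq_bigr => m _; by rewrite /a hdot expRD mulrA.
have s3 : Z sig = \sum_(m <- S) a m * expR (h m).
  by apply: eq_bigr => m _; rewrite /a hdot expRD mulrA.
have s4 : Z tau = \sum_(m <- S) a m by [].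
have Ztp := Z_pos tau; have Zsp := Z_pos sig.
pose C := Z sig / Z tau.
have Cp : 0 < C by rewrite divr_gt0.
pose c0 := ln C.
have Cc0 : C = expR c0 by rewrite /c0 lnK.
have hC : C * Z tau = Z sig by rewrite /C divfK // gt_eqF.
pose E m := a m * ((h m - c0) * (expR (h m) - expR c0)).
have E0 : \sum_(m <- S) E m = 0.
  have -> : \sum_(m <- S) E m = \sum_(m <- S) a m * expR (h m) * h m - C * \sum_(m <- S) a m * h m
       - c0 * \sum_(m <- S) a m * expR (h m) + c0 * C * \sum_(m <- S) a m.
    rewrite !mulr_sumr -!sumrB -big_split /=; apply: eq_bigr => m _.
    by rewrite /E -Cc0; ring.
  rewrite s1 s2 -s3 -s4 -hC; ring.
have Ege m : 0 <= E m by rewrite /E mulr_ge0 ?exp_mono_ge0 // mulr_ge0 ?c_ge0 ?expR_ge0.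
have Em m : m \in S -> E m = 0.
  move: E0 => /eqP; rewrite psumr_eq0 // => /allP H mS.
  by have := H m mS; rewrite implyTb => /eqP.
have Eh m : m \in S -> h m = c0.
  move=> mS; have := Em m mS; rewrite /E => /eqP; rewrite mulf_eq0 => /orP[|/eqP].
    by rewrite /a mulf_eq0 gt_eqF ?c_pos // gt_eqF ?expR_gt0.
  exact: exp_mono_eq0.
have c00 : c0 = 0.
  have mS : mkm (fun=> 0%N) \in S by apply: in_S => j; rewrite mkmE.
  rewrite -(Eh _ mS) /h big1 // => j _; by rewrite mkmE mul0r.
apply/rowP => j.
have mS : mkm (fun k => nat_of_bool (k == j)) \in S by apply: in_S => k; rewrite mkmE leq_b1.
have hj : h (mkm (fun k => nat_of_bool (k == j))) = del j.
  rewrite /h (bigD1 j) //= big1 ?addr0; first by rewrite mkmE eqxx mul1r.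
  by move=> k /negbTE hk; rewrite mkmE hk mul0r.
have := Eh _ mS; rewrite hj c00 /del => /eqP; rewrite subr_eq0 => /eqP ->.
by [].
Qed.


Lemma dotm_cont m (x : 'rV[R]_d) : {for x, continuous (dotm m)}.
Proof.
apply: cont_seqsum => j.
exact: (continuousM (@cst_continuous _ _ ((m j)%:R : R) x) (@coord_continuous R 1 d ord0 j x)).
Qed.

Lemma Z_cont (x : 'rV[R]_d) : {for x, continuous Z}.
Proof.
apply: cont_seqsum => m.
apply: (continuousM (@cst_continuous _ _ (c m) x)).
exact: (continuous_comp (dotm_cont m x) (@continuous_expR R _)).
Qed.

Lemma F_cont : continuous F.
Proof.
move=> x.
have h2 : {for x, continuous (dotr lam)}.
  apply: cont_seqsum => j.
  exact: (continuousM (@cst_continuous _ _ (lam ord0 j) x) (@coord_continuous R 1 d ord0 j x)).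
have h1 := (continuous_comp (Z_cont x) (continuous_ln (Z_pos x))).
exact: (continuousB h1 h2).
Qed.

Lemma exists_min : exists tau : 'rV[R]_d, forall t, F tau <= F t.
Proof.
pose B i := `|(F 0 - ln cmin) / mu i| + 1.
have B0 i : 0 <= B i by rewrite /B addr_ge0.
pose A := [set t : 'rV[R]_d | forall i, `[- B i, B i]%classic (t ord0 i)]%classic.
have A0 : (0 : 'rV[R]_d) \in A.
  by apply/mem_set => i /=; rewrite mxE in_itv /= oppr_le0 B0.
have cA : compact A.
  exact: (@rV_compact _ d (fun i => `[- B i, B i]%classic) (fun i => @segment_compact R _ _)).
have An : (A !=set0)%classic by exists 0; exact: set_mem A0.
have cF : {within A, continuous F}%classic by exact: continuous_subspaceT F_cont.
have [tau tA tmin] := EVT_min_rV An cA cF.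
exists tau => t.
have [/existsP [i hi]|/existsPn hn] := boolP [exists i, B i < `|t ord0 i|].
  apply: (le_trans (tmin _ A0)).
  have := coerc t i.
  have hmu := mu_gt0 i.
  have k1 : mu i * B i < mu i * `|t ord0 i| by rewrite ltr_pM2l.
  have k2 : (F 0 - ln cmin) / mu i * mu i = F 0 - ln cmin by rewrite divfK // gt_eqF.
  have k3 : (F 0 - ln cmin) / mu i * mu i <= `|(F 0 - ln cmin) / mu i| * mu i by rewrite ler_pM2r // ler_norm.
  rewrite /B mulrDr mulr1 in k1; rewrite [_ * mu i]mulrC in k3.
  lra.
apply: tmin; rewrite inE => i /=; rewrite in_itv /= -ler_norml.
by rewrite leNgt hn.
Qed.


Lemma crit_min (tau : 'rV[R]_d) : (forall t, F tau <= F t) ->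
  forall i, is_derive tau (delta_mx 0 i) F 0.
Proof.
move=> hmin i; apply: transfer.
apply: (@derive1_at_min R _ (-1) 1 0).
- lra.
- by move=> x _; exact: (@ex_derive _ _ _ _ _ _ _ (deriv1D tau i x)).
- by rewrite in_itv /= oppr_lt0 ltr01.
- by move=> x _; rewrite /= scale0r addr0; exact: hmin.
Qed.

Lemma deriv0_Dv (tau : 'rV[R]_d) i : is_derive tau (delta_mx 0 i) F 0 -> Dv tau i = 0.
Proof.
move=> h; rewrite -(@derive_val _ _ _ _ _ _ _ (is_derive_F tau i)).
exact: (@derive_val _ _ _ _ _ _ _ h).
Qed.


Lemma main_lam :
    (forall l : 'I_d -> \bar R, (exists i, l i = +oo%E \/ l i = -oo%E) ->
       tends_to_pinfty (fun t => Kfun P t - dotr lam t) l) /\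
    (exists! tau : 'rV[R]_d,
       forall i : 'I_d, is_derive tau (delta_mx 0 i) (fun t => Kfun P t - dotr lam t) 0).
Proof.
have eF : (fun t => Kfun P t - dotr lam t) = F by apply/funext => t; exact: F_eq.
split; first exact: tends.
rewrite eF; have [tau hmin] := exists_min.
exists tau; split; first exact: crit_min.
move=> sig hs; apply: uniq_crit => j.
  by apply: deriv0_Dv; exact: (@crit_min tau hmin j).
by apply: deriv0_Dv; exact: (hs j).
Qed.

End Main.

Theorem lemma9 (R : realType) (d : nat) (P : mpoly.mpoly d R) :
  (1 <= d)%N ->
  (forall m : mpoly.multinom d, (forall i, (m i <= 1)%N) -> 0 < mpoly.mcoeff m P) ->
  (forall m : mpoly.multinom d, ~ (forall i, (m i <= 1)%N) -> mpoly.mcoeff m P = 0) ->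
  full_rank (fun m => mpoly.mcoeff m P) /\
  aperiodic (fun m => mpoly.mcoeff m P) /\
  forall lam : 'rV[R]_d, (forall i, 0 < lam ord0 i < 1) ->
    (forall l : 'I_d -> \bar R, (exists i, l i = +oo%E \/ l i = -oo%E) ->
       tends_to_pinfty (fun t => Kfun P t - dotr lam t) l) /\
    (exists! tau : 'rV[R]_d,
       forall i : 'I_d, is_derive tau (delta_mx 0 i) (fun t => Kfun P t - dotr lam t) 0).
Proof.
move=> _ hp hz; split; first exact: (@frank R d P hp).
split; first exact: (@aper R d P hp).
move=> lam hlam; exact: (@main_lam R d P hp hz lam hlam).
Qed.
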